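(* For every positive integer $n$, $b'_n\equiv 0\pmod 2$ and $b''_n\equiv 0\pmod 5$.
   Context: For $m\in\mathbb{N}$, $b_m=\sum_{k=0}^m\binom{m}{k}^2\binom{m+k}{k}$ (Apéry numbers). For a sequence $(x_k)_{k\ge0}$, its binomial transform is $x'_n=\sum_{k=0}^n\binom{n}{k}x_k$; thus $b'_n=\sum_{k=0}^n\binom nk b_k$ and $b''_n=\sum_{k=0}^n\binom{n}{k}b'_k$. *)

(* Defs.v *)
From mathcomp Require Import all_boot.
Set Implicit Arguments. Unset Strict Implicit. Unset Printing Implicit Defensive.

Definition apery (m : nat) : nat :=
  \sum_(0 <= k < m.+1) 'C(m, k) ^ 2 * 'C(m + k, k).

(* binomial transform x'_n = sum_{k=0}^n C(n,k) x_k *)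
Definition binom_transform (x : nat -> nat) (n : nat) : nat :=
  \sum_(0 <= k < n.+1) 'C(n, k) * x k.

Definition apery1 := binom_transform apery.
Definition apery2 := binom_transform apery1.

(* Main.v *)
Require Import Defs.
From mathcomp Require Import all_boot all_algebra zify ring.
Import GRing.Theory.

Section Lucas.
Variable p : nat.
Hypothesis pr : prime p.

Local Notation "n %:F" := (GRing.natmul (1%R : 'F_p) n) (format "n %:F").

Lemma p_gt0 : (0 < p)%N. Proof. exact: prime_gt0. Qed.

Lemma natF0 n : p %| n -> n%:F = 0%R.
Proof. by move=> /dvdnP[k ->]; rewrite natrM pchar_Fp_0 // mulr0. Qed.

Lemma sum_pred1 (n k : nat) (x : 'F_p) :
  (\sum_(j < n) (if (j : nat) == k then x else 0))%R = if (k < n)%N then x else 0%R.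
Proof.
elim: n => [|n IH]; first by rewrite big_ord0.
rewrite big_ord_recr /= IH.
case: ifP => h1; case: eqP => h2; case: ifP => h3; rewrite ?addr0 ?add0r //; lia.
Qed.

Lemma shiftp l i :
  'C(p + l, i)%:F = ('C(l, i)%:F + (if (p <= i)%N then 'C(l, i - p)%:F else 0))%R.
Proof.
rewrite -binomial.Vandermonde natr_sum.
rewrite (eq_bigr (fun j : 'I_i.+1 => (if (j : nat) == 0%N then 'C(l, i)%:F else 0)
   + (if (j : nat) == p then 'C(l, i - p)%:F else 0))%R); last first.
  move=> [j hj] _ /=; rewrite natrM.
  have p0 := p_gt0.
  case: (posnP j) => [->|j0].
    rewrite bin0 subn0 mul1r; case: eqP => [?|_]; [lia | by rewrite addr0].
  rewrite add0r.
  case: (ltngtP j p) => h.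
  - by rewrite natF0 ?mul0r // prime_dvd_bin // h j0.
  - by rewrite bin_small // mul0r.
  - by rewrite h binn mul1r.
rewrite big_split /= !sum_pred1 ltnS.
by rewrite ltnS.
Qed.

Lemma lucas a c r s : (r < p)%N -> (s < p)%N ->
  'C(p * a + r, p * c + s)%:F = ('C(a, c) * 'C(r, s))%N%:F.
Proof.
move=> rp sp; elim: a c => [|a IH] c.
  rewrite muln0 add0n; case: c => [|c].
    by rewrite muln0 add0n bin0 mul1n.
  rewrite bin0n mul0n bin_small //.
  have: (p <= p * c.+1)%N by rewrite leq_pmulr.
  lia.
have -> : (p * a.+1 + r = p + (p * a + r))%N by rewrite mulnSr; lia.
rewrite shiftp.
case: c => [|c].
  by rewrite IH muln0 add0n leqNgt sp addr0 !bin0.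
have -> : (p <= p * c.+1 + s)%N by rewrite mulnSr; lia.
have -> : (p * c.+1 + s - p = p * c + s)%N by rewrite mulnSr; lia.
by rewrite !IH -natrD -mulnDl.
Qed.

Lemma lucas2 m c r s : (r < p)%N -> (s < p)%N ->
  'C(p * m + (r + s), p * c + s)%:F = ('C(m, c) * 'C(r + s, s))%N%:F.
Proof.
move=> rp sp.
case: (ltnP (r + s) p) => h; first exact: lucas.
have tp : (r + s - p < p)%N by lia.
have ts : (r + s - p < s)%N by lia.
have e1 : (r + s = p * 1 + (r + s - p))%N by lia.
have e2 : (p * m + (r + s) = p * m.+1 + (r + s - p))%N by rewrite mulnSr; lia.
have h2 := @lucas 1 0 _ _ tp sp.
rewrite -e1 muln0 add0n (bin_small ts) muln0 in h2.
by rewrite e2 lucas // (bin_small ts) muln0 natrM h2 mulr0.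
Qed.

Lemma reindex (G : nat -> 'F_p) n :
  (\sum_(0 <= k < p * n) G k = \sum_(0 <= c < n) \sum_(0 <= s < p) G (p * c + s)%N)%R.
Proof.
elim: n => [|n IH]; first by rewrite muln0 !big_geq.
rewrite big_nat_recr //= -IH mulnSr (big_cat_nat _ (n := p * n)) //=; last by lia.
congr (_ + _)%R.
rewrite -{1}(add0n (p * n)) big_addn addKn.
by apply: eq_big_nat => i _; rewrite addnC.
Qed.

Lemma extend (G : nat -> 'F_p) n N : (n < N)%N -> (forall k, (n < k)%N -> G k = 0%R) ->
  (\sum_(0 <= k < n.+1) G k = \sum_(0 <= k < N) G k)%R.
Proof.
move=> hN hG; symmetry; rewrite (big_cat_nat _ (n := n.+1)) //=.
rewrite [X in (_ + X)%R]big_nat_cond [X in (_ + X)%R]big1 ?addr0 // => k /andP[/andP[hk _] _]; exact: hG.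
Qed.

Definition LP (x : nat -> nat) := forall a r, (r < p)%N -> (x (p * a + r))%:F = ((x a)%:F * (x r)%:F)%R.

Lemma LP_apery : LP apery.
Proof.
move=> a r rp; rewrite /apery natr_sum.
rewrite (@extend _ _ (p * a.+1)); last first.
- by move=> k hk; rewrite bin_small // expnS mul0n.
- by rewrite mulnSr; lia.
rewrite reindex.
rewrite (eq_bigr (fun c => \sum_(0 <= s < p) (('C(a, c) ^ 2 * 'C(a + c, c))%N%:F
          * ('C(r, s) ^ 2 * 'C(r + s, s))%N%:F))%R); last first.
  move=> c _; apply: eq_big_nat => s /andP[_ sp].
  have -> : (p * a + r + (p * c + s) = p * (a + c) + (r + s))%N by rewrite mulnDr; lia.
  rewrite !natrM lucas2 // lucas // !natrM; ring.
under eq_bigr do rewrite -big_distrr /=.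
rewrite -big_distrl /= !natr_sum; congr (_ * _)%R.
rewrite -(@extend _ r p rp) //.
by move=> k hk; rewrite bin_small // expnS mul0n.
Qed.

Lemma LP_bt x : LP x -> LP (binom_transform x).
Proof.
move=> hx a r rp; rewrite /binom_transform natr_sum.
rewrite (@extend _ _ (p * a.+1)); last first.
- by move=> k hk; rewrite bin_small.
- by rewrite mulnSr; lia.
rewrite reindex.
rewrite (eq_bigr (fun c => \sum_(0 <= s < p) (('C(a, c) * x c)%N%:F
          * ('C(r, s) * x s)%N%:F))%R); last first.
  move=> c _; apply: eq_big_nat => s /andP[_ sp].
  rewrite !natrM lucas // hx // natrM; ring.
under eq_bigr do rewrite -big_distrr /=.
rewrite -big_distrl /= !natr_sum; congr (_ * _)%R.
rewrite -(@extend _ r p rp) //.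
by move=> k hk; rewrite bin_small.
Qed.

Lemma LP_zero x : LP x -> (forall r, (0 < r < p)%N -> (x r)%:F = 0%R) ->
  forall n, (0 < n)%N -> (x n)%:F = 0%R.
Proof.
move=> hx hb n; elim/ltn_ind: n => n IH n0.
have e : n = (p * (n %/ p) + n %% p)%N by rewrite mulnC -divn_eq.
have np : (n %% p < p)%N by rewrite ltn_mod p_gt0.
case: (posnP (n %% p)) => h.
  have q0 : (0 < n %/ p)%N.
    have hd : p %| n by rewrite /dvdn h.
    by rewrite divn_gt0 ?p_gt0 // dvdn_leq.
  have qn : (n %/ p < n)%N by rewrite ltn_Pdiv // prime_gt1.
  by rewrite e hx // IH // mul0r.
by rewrite e hx // (hb (n %% p)) ?h ?np // mulr0.
Qed.

End Lucas.

Lemma F0_mod q n : prime q -> (n%:R : 'F_q)%R = 0%R -> n = 0 %[mod q].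
Proof. by move=> pq h; rewrite mod0n -(val_Fp_nat pq) h. Qed.

Lemma b1_1 : 2 %| apery1 1. Proof. by rewrite /apery1 /binom_transform /apery unlock. Qed.
Lemma b2_1 : 5 %| apery2 1. Proof. by rewrite /apery2 /apery1 /binom_transform /apery unlock. Qed.
Lemma b2_2 : 5 %| apery2 2. Proof. by rewrite /apery2 /apery1 /binom_transform /apery unlock. Qed.
Lemma b2_3 : 5 %| apery2 3. Proof. by rewrite /apery2 /apery1 /binom_transform /apery unlock. Qed.
Lemma b2_4 : 5 %| apery2 4. Proof. by rewrite /apery2 /apery1 /binom_transform /apery unlock. Qed.

Theorem lemma4p1 (n : nat) : 0 < n ->
  apery1 n = 0 %[mod 2] /\ apery2 n = 0 %[mod 5].
Proof.
move=> n0; split.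
- apply: F0_mod => //; apply: (@LP_zero 2) => //.
    by apply: LP_bt => //; apply: LP_apery.
  case=> [|[|r]] //= _; exact: natF0 b1_1.
- apply: F0_mod => //; apply: (@LP_zero 5) => //.
    by apply: LP_bt => //; apply: LP_bt => //; apply: LP_apery.
  case=> [|[|[|[|[|r]]]]] //= _.
  + exact: natF0 b2_1.
  + exact: natF0 b2_2.
  + exact: natF0 b2_3.
  + exact: natF0 b2_4.
Qed.
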